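(* Let $S$ be a characteristic subset of $\mathbb{R}_{\ge0}$, let $X$ be an $\mathbb{R}_{\ge0}$-ultrametrizable topological space, and let $A$ be a closed subset of $X$. Then there exists a map $\Upsilon\colon\mathrm{Ult}(A;S)\to\mathrm{Ult}(X;S)$ such that: (B1) $\Upsilon$ is an isometric embedding: $\mathcal{UD}_X^S(\Upsilon(d_1),\Upsilon(d_2))=\mathcal{UD}_A^S(d_1,d_2)$ for all $d_1,d_2\in\mathrm{Ult}(A;S)$; (B2) $\Upsilon(d)|_{A\times A}=d$ for all $d\in\mathrm{Ult}(A;S)$; (B3) if $d_1,d_2\in\mathrm{Ult}(A;S)$ satisfy $d_1(a,b)\le d_2(a,b)$ for all $a,b\in A$, then $\Upsilon(d_1)(x,y)\le\Upsilon(d_2)(x,y)$ for all $x,y\in X$; (B4) $\Upsilon(d\lor e)=\Upsilon(d)\lor\Upsilon(e)$ for all $d,e\in\mathrm{Ult}(A;S)$. Moreover, if $X$ is completely metrizable, then $\Upsilon$ can be chosen to satisfy (B1)–(B4) and also (B5) if $d\in\mathrm{Ult}(A;S)$ is complete, then so is $\Upsilon(d)$.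
   Context: A subset $S\subseteq\mathbb{R}_{\ge0}$ is characteristic if $0\in S$ and for every $s>0$ there is $t\in S\setminus\{0\}$ with $t\le s$. For $S\subseteq\mathbb{R}_{\ge 0}$ with $0\in S$, an $S$-ultrametric on a set $Y$ is a map $d\colon Y\times Y\to S$ with $d(x,y)=0\iff x=y$, $d(x,y)=d(y,x)$ and $d(x,y)\le\max\{d(x,z),d(z,y)\}$. For a topological space $Y$, $\mathrm{Ult}(Y;S)$ is the set of $S$-ultrametrics on $Y$ generating the topology of $Y$ (via open balls); $Y$ is $\mathbb{R}_{\ge0}$-ultrametrizable if $\mathrm{Ult}(Y;\mathbb{R}_{\ge0})\ne\emptyset$. $(d\lor e)(x,y)=\max\{d(x,y),e(x,y)\}$. $\mathcal{UD}_Y^S(d,e)$ is the infimum of all $\epsilon\in S\sqcup\{\infty\}$ such that $d(x,y)\le\max\{e(x,y),\epsilon\}$ and $e(x,y)\le\max\{d(x,y),\epsilon\}$ for all $x,y\in Y$. A metric is complete if every Cauchy filter converges (equivalently, every Cauchy sequence converges). $A$ carries the subspace topology. *)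

(* Defs.v *)
From HB Require Import structures.
From mathcomp Require Import all_boot all_order all_algebra.
From mathcomp Require Import all_classical all_reals all_analysis.
Import Order.TTheory GRing.Theory Num.Theory.
Local Open Scope classical_set_scope.
Local Open Scope ring_scope.
Set Implicit Arguments. Unset Strict Implicit.

Definition characteristic (R : realType) (S : set R) : Prop :=
  [/\ S `<=` [set x | 0 <= x], S 0 &
      forall s : R, 0 < s -> exists t : R, [/\ S t, t != 0 & t <= s]].

Definition is_S_ultrametric (R : realType) (T : Type) (S : set R)
    (d : T -> T -> R) : Prop :=
  [/\ forall x y, S (d x y),
      forall x y, d x y = 0 <-> x = y,
      forall x y, d x y = d y x &
      forall x y z, d x y <= Num.max (d x z) (d z y)].

Definition generates_topology (R : realType) (T : Type) (op : set T -> Prop)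
    (d : T -> T -> R) : Prop :=
  forall U : set T,
    op U <-> (forall x, U x -> exists2 r : R, 0 < r & [set y | d x y < r] `<=` U).

Definition Ult (R : realType) (T : Type) (op : set T -> Prop) (S : set R) :
    set (T -> T -> R) :=
  [set d | is_S_ultrametric S d /\ generates_topology op d].

Definition subspace_open (X : topologicalType) (A : set X) :
    set {x : X | A x} -> Prop :=
  fun U => exists V : set X, open V /\ U = (@proj1_sig X A) @^-1` V.

Definition UD (R : realType) (T : Type) (S : set R) (d e : T -> T -> R) : \bar R :=
  ereal_inf ([set eps%:E | eps in [set eps : R | S eps /\
       (forall x y, d x y <= Num.max (e x y) eps /\ e x y <= Num.max (d x y) eps)]]
     `|` [set +oo%E]).

Definition is_metric (R : realType) (T : Type) (d : T -> T -> R) : Prop :=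
  [/\ forall x y, 0 <= d x y,
      forall x y, d x y = 0 <-> x = y,
      forall x y, d x y = d y x &
      forall x y z, d x y <= d x z + d z y].

Definition complete_metric (R : realType) (T : Type) (d : T -> T -> R) : Prop :=
  forall u : nat -> T,
    (forall eps : R, 0 < eps -> exists N : nat,
        forall m n, (N <= m)%N -> (N <= n)%N -> d (u m) (u n) < eps) ->
    exists l : T, forall eps : R, 0 < eps -> exists N : nat,
        forall n, (N <= n)%N -> d (u n) l < eps.

Definition completely_metrizable (R : realType) (X : topologicalType) : Prop :=
  exists d : X -> X -> R, [/\ is_metric d, generates_topology open d & complete_metric d].
Arguments subspace_open {X} A.

(* Main.v *)
Require Import Defs.
From HB Require Import structures.
From mathcomp Require Import all_boot all_order all_algebra.
From mathcomp Require Import all_classical all_reals all_analysis.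
From mathcomp Require Import lra.
From Stdlib Require Import ClassicalEpsilon.
Import Order.TTheory GRing.Theory Num.Theory.
Local Open Scope classical_set_scope.
Local Open Scope ring_scope.
Set Implicit Arguments. Unset Strict Implicit. Unset Printing Implicit Defensive.
Section Gen.
Variable R : realType.

Definition ultra (T : Type) (e : T -> T -> R) :=
  [/\ forall x y, 0 <= e x y, forall x y, e x y = 0 <-> x = y,
      forall x y, e x y = e y x & forall x y z, e x y <= Num.max (e x z) (e z y)].

Lemma S_ultra (T : Type) (S : set R) (e : T -> T -> R) :
  S `<=` [set x | 0 <= x] -> is_S_ultrametric S e -> ultra e.
Proof. by move=> Sp [h1 h2 h3 h4]; split => // x y; apply: Sp. Qed.

Lemma ultra0 (T : Type) (e : T -> T -> R) : ultra e -> forall x, e x x = 0.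
Proof. by case=> _ h _ _ x; apply/h. Qed.

Lemma ultra_ball (T : Type) (e : T -> T -> R) : ultra e ->
  forall x y z r, e x y < r -> e y z < r -> e x z < r.
Proof.
case=> _ _ _ h x y z r xy yz; apply: le_lt_trans (h x z y) _.
by rewrite gt_max xy yz.
Qed.

Lemma ultra_ball_eq (T : Type) (e : T -> T -> R) : ultra e ->
  forall x y z r, e x y < r -> (e y z < r <-> e x z < r).
Proof.
move=> u x y z r xy; split => h; first exact: ultra_ball xy h.
case: u => a b c d.
by apply: (ultra_ball (And4 a b c d)) h; rewrite c.
Qed.

Lemma ultra_iso (T : Type) (e : T -> T -> R) : ultra e ->
  forall x y z, e x y < e x z -> e y z = e x z.
Proof.
move=> [h0 h1 hs hu] x y z xy; apply/le_anti/andP; split.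
  apply: le_trans (hu y z x) _; rewrite ge_max hs (ltW xy) lexx //.
have := hu x z y; rewrite le_max => /orP [|//].
by rewrite leNgt xy.
Qed.

Lemma gen_equiv (T : Type) (op : set T -> Prop) (e f : T -> T -> R) :
  generates_topology op e ->
  (forall x eps, 0 < eps -> exists2 eta, 0 < eta & forall y, e x y < eta -> f x y < eps) ->
  (forall x eta, 0 < eta -> exists2 eps, 0 < eps & forall y, f x y < eps -> e x y < eta) ->
  generates_topology op f.
Proof.
move=> g H1 H2 U; rewrite g; split => hU x Ux.
- have [eta eta0 sub] := hU x Ux; have [eps eps0 h] := H2 x eta eta0.
  by exists eps => // y /h; apply: sub.
- have [eps eps0 sub] := hU x Ux; have [eta eta0 h] := H1 x eps eps0.
  by exists eta => // y /h; apply: sub.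
Qed.

Lemma ball_open (T : Type) (op : set T -> Prop) (e : T -> T -> R) :
  ultra e -> generates_topology op e -> forall x r, op [set y | e x y < r].
Proof.
move=> u g x r; apply/g => y /= xy; exists r.
  by case: u => h0 _ _ _; apply: le_lt_trans (h0 x y) xy.
by move=> z /= yz; apply: ultra_ball xy yz.
Qed.

Lemma gen_local (T : Type) (op : set T -> Prop) (e f : T -> T -> R) :
  ultra f -> generates_topology op e -> generates_topology op f ->
  forall x eps, 0 < eps -> exists2 eta, 0 < eta & forall y, e x y < eta -> f x y < eps.
Proof.
move=> uf ge gf x eps eps0.
have := ball_open uf gf x eps; move/ge => /(_ x) [].
  by rewrite /= (ultra0 uf).
by move=> eta eta0 sub; exists eta => // y /sub.
Qed.

Lemma sig_eq (X : Type) (A : X -> Prop) (a b : {x : X | A x}) :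
  proj1_sig a = proj1_sig b -> a = b.
Proof.
case: a b => [a ha] [b hb] /= eab; subst b; congr exist; exact: Prop_irrelevance.
Qed.

Lemma ultra_sub (X : Type) (A : set X) (w : X -> X -> R) : ultra w ->
  ultra (fun a b : {x : X | A x} => w (proj1_sig a) (proj1_sig b)).
Proof.
move=> [h0 h1 hs hu]; split => //.
- move=> a b; split; first by move/h1; apply: sig_eq.
  by move=> ->; apply/h1.
Qed.

Lemma sub_gen (X : topologicalType) (A : set X) (w : X -> X -> R) :
  ultra w -> generates_topology open w ->
  generates_topology (subspace_open A) (fun a b => w (proj1_sig a) (proj1_sig b)).
Proof.
move=> u g U; split.
- move=> [V [oV ->]] a /= Va.
  have [r r0 sub] := (g V).1 oV _ Va.
  by exists r => // b /= ab; apply: sub.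
- move=> hU.
  pose V := [set x | exists a, U a /\ exists2 r, 0 < r &
     ([set b | w (proj1_sig a) (proj1_sig b) < r] `<=` U /\ w (proj1_sig a) x < r)].
  exists V; split.
    apply/g => x [a [Ua [r r0 [sub ax]]]]; exists r => // y /= xy.
    exists a; split => //; exists r => //; split => //.
    exact: ultra_ball ax xy.
  apply/seteqP; split => a /=.
    move=> Ua; exists a; split => //.
    have [r r0 sub] := hU a Ua; exists r => //; split => //.
    by rewrite (ultra0 u).
  by move=> [b [Ub [r r0 [sub ba]]]]; apply: sub.
Qed.

Lemma inv_trunc_lt (t : R) : 0 < t -> ((Num.truncn t^-1).+1%:R)^-1 < t.
Proof.
move=> t0.
have ti : 0 <= t^-1 by rewrite invr_ge0 ltW.
have /andP [_ h] := truncn_itv ti.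
rewrite invf_plt ?posrE //; exact: ltr0Sn.
Qed.

End Gen.
Section Rho.
Variables (R : realType) (S : set R).
Hypothesis hS : characteristic S.

Definition pickS (c : R) : R := xget 0 [set t | S t /\ t != 0 /\ t <= c].

Lemma pickSP c : 0 < c -> [/\ S (pickS c), 0 < pickS c & pickS c <= c].
Proof.
move=> c0; case: hS => Sp S0 Sc.
have [t [St t0 tc]] := Sc c c0.
have := @xgetPex _ 0 [set t | S t /\ t != 0 /\ t <= c] (ex_intro _ t (conj St (conj t0 tc))).
rewrite -/(pickS c) => -[h1 [h2 h3]]; split => //.
by rewrite lt0r h2 /=; apply: Sp.
Qed.

Fixpoint sq (n : nat) : R :=
  match n with 0 => pickS 1 | n'.+1 => pickS (Num.min (sq n') (n.+1%:R)^-1) end.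

Lemma sqP n : [/\ S (sq n), 0 < sq n & sq n <= (n.+1%:R)^-1].
Proof.
elim: n => [|n [_ h1 _]] /=; first by have [] := pickSP ltr01; rewrite invr1.
have m0 : 0 < Num.min (sq n) (n.+2%:R)^-1 by rewrite lt_min h1 invr_gt0 ltr0Sn.
have [a b c] := pickSP m0; split => //; apply: le_trans c _; by rewrite ge_min lexx orbT.
Qed.

Lemma sq_decr m n : (m <= n)%N -> sq n <= sq m.
Proof.
move/subnK => <-; elim: (n - m)%N => [|k IH]; first by rewrite add0n.
rewrite addSn /=.
have [_ h1 _] := sqP (k + m).
have m0 : 0 < Num.min (sq (k + m)) ((k + m).+2%:R)^-1 by rewrite lt_min h1 invr_gt0 ltr0Sn.
have [_ _ c] := pickSP m0; apply: le_trans c _; apply: le_trans IH.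
by rewrite ge_min lexx.
Qed.

Definition rho (t : R) : R := if t <= 0 then 0 else sq (Num.truncn t^-1).

Lemma rhoS t : S (rho t).
Proof. rewrite /rho; case: ifP => _; [by case: hS | by case: (sqP (Num.truncn t^-1))]. Qed.

Lemma rho0 : rho 0 = 0.
Proof. by rewrite /rho lexx. Qed.

Lemma rho_gt0 t : 0 < t -> 0 < rho t.
Proof. move=> t0; rewrite /rho leNgt t0 /=; by case: (sqP (Num.truncn t^-1)). Qed.

Lemma rho_ge0 t : 0 <= rho t.
Proof. rewrite /rho; case: ifP => // _; by case: (sqP (Num.truncn t^-1)) => _ /ltW. Qed.

Lemma rho_le t : 0 <= t -> rho t <= t.
Proof.
rewrite le0r => /orP [/eqP -> | t0]; first by rewrite rho0.
rewrite /rho (_ : (t <= 0) = false); last by rewrite leNgt t0.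
have [_ _ h] := sqP (Num.truncn t^-1).
by apply: ltW; apply: le_lt_trans h (inv_trunc_lt t0).
Qed.

Lemma rho_mono t t' : t <= t' -> rho t <= rho t'.
Proof.
move=> tt'; rewrite {1}/rho; case: ifP => [_|]; first exact: rho_ge0.
move/negbT; rewrite -ltNge => t0.
have t'0 : 0 < t' by apply: lt_le_trans tt'.
rewrite /rho (_ : (t' <= 0) = false); last by rewrite leNgt t'0.
apply: sq_decr; apply: le_truncn.
by rewrite lef_pV2 ?posrE.
Qed.

Lemma rho_lt t t' : rho t < rho t' -> t < t'.
Proof. by move=> h; rewrite ltNge; apply/negP => /rho_mono; rewrite leNgt h. Qed.

Lemma rho_max a b : rho (Num.max a b) = Num.max (rho a) (rho b).
Proof.
case: (leP a b) => ab; first by rewrite (max_idPr (rho_mono ab)).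
by rewrite (max_idPl (rho_mono (ltW ab))).
Qed.

Lemma rho_eq0 t : 0 <= t -> rho t = 0 -> t = 0.
Proof.
rewrite le0r => /orP [/eqP -> //| t0] h.
by have := rho_gt0 t0; rewrite h ltxx.
Qed.

End Rho.
Lemma maxS (R : realType) (S : set R) a b : S a -> S b -> S (Num.max a b).
Proof. by move=> Sa Sb; case: (leP a b). Qed.

Lemma max0 (R : realType) (a b : R) : 0 <= a -> 0 <= b -> Num.max a b = 0 -> a = 0 /\ b = 0.
Proof. by move=> a0 b0; case: (leP a b) => h e; split; lra. Qed.

Lemma max_le_sum (R : realType) (a b : R) : 0 <= a -> 0 <= b -> Num.max a b <= a + b.
Proof. by move=> a0 b0; case: (leP a b) => h; lra. Qed.

Lemma maxU (R : realType) (a b a1 a2 b1 b2 : R) : a <= Num.max a1 a2 -> b <= Num.max b1 b2 ->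
  Num.max a b <= Num.max (Num.max a1 b1) (Num.max a2 b2).
Proof.
move=> h1 h2; rewrite ge_max; apply/andP; split.
  apply: le_trans h1 _; rewrite ge_max; apply/andP; split; rewrite le_max; apply/orP;
  [left|right]; by rewrite le_max lexx.
apply: le_trans h2 _; rewrite ge_max; apply/andP; split; rewrite le_max; apply/orP;
  [left|right]; by rewrite le_max lexx orbT.
Qed.


Section Main.
Variables (R : realType) (S : set R) (X : topologicalType) (A : set X).
Hypothesis hS : characteristic S.
Variable w : X -> X -> R.
Hypothesis uw : ultra w.
Hypothesis gw : generates_topology open w.
Hypothesis cA : closed A.
Variable a0 : {x : X | A x}.

Definition delta x := inf [set w x a | a in A].

Lemma w0 x y : 0 <= w x y. Proof. by case: uw. Qed.
Lemma wxx x : w x x = 0. Proof. exact (ultra0 uw x). Qed.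
Lemma wsym x y : w x y = w y x. Proof. by case: uw. Qed.
Lemma weq x y : w x y = 0 -> x = y. Proof. by case: uw => _ h _ _ /h. Qed.
Lemma wu x y z : w x y <= Num.max (w x z) (w z y). Proof. by case: uw. Qed.

Lemma delta_hasinf x : has_inf [set w x a | a in A].
Proof.
split; first by exists (w x (proj1_sig a0)), (proj1_sig a0) => //; exact: (proj2_sig a0).
by exists 0 => _ [a _ <-]; apply: w0.
Qed.

Lemma delta_ge0 x : 0 <= delta x.
Proof.
apply: lb_le_inf; first by case: (delta_hasinf x).
by move=> _ [a _ <-]; apply: w0.
Qed.

Lemma delta_le x a : A a -> delta x <= w x a.
Proof. by move=> Aa; apply: (ge_inf (delta_hasinf x).2); exists a. Qed.

Lemma deltaA x : A x -> delta x = 0.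
Proof.
move=> Ax; apply/le_anti; rewrite delta_ge0 andbT.
by have := delta_le x Ax; rewrite wxx.
Qed.

Lemma delta_gt0 x : ~ A x -> 0 < delta x.
Proof.
move=> nAx.
have oC : open (~` A) := closed_openC cA.
have [r r0 sub] := (gw _).1 oC x nAx.
apply: lt_le_trans r0 _; apply: lb_le_inf; first by case: (delta_hasinf x).
move=> _ [a Aa <-]; rewrite leNgt; apply/negP => /sub; by apply.
Qed.

Lemma delta_adh x : 0 < delta x -> exists a, A a /\ w x a < delta x + delta x.
Proof.
move=> d0; have [_ [a Aa <-] h] := inf_adherent d0 (delta_hasinf x).
by exists a.
Qed.

Lemma delta_notA x y : w x y < delta x -> ~ A y.
Proof. by move=> h Ay; have := delta_le x Ay; rewrite leNgt h. Qed.

Lemma delta_eq x y : w x y < delta x -> delta y = delta x.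
Proof.
move=> h; rewrite /delta; congr inf; apply/seteqP; split => _ [a Aa <-]; exists a => //.
- apply/esym/(ultra_iso uw); exact: lt_le_trans h (delta_le x Aa).
- apply: (ultra_iso uw); exact: lt_le_trans h (delta_le x Aa).
Qed.

Definition cond x y := ~ A x /\ w x y < delta x.

Lemma cond_sym x y : cond x y -> cond y x.
Proof.
move=> [nAx h]; split; first exact: delta_notA h.
by rewrite wsym (delta_eq h).
Qed.

Definition Cl x := [set y | w x y < delta x].

Lemma Cl_eq x y : w x y < delta x -> Cl y = Cl x.
Proof.
move=> h; apply/seteqP; split => z; rewrite /Cl /= (delta_eq h).
  exact: (ultra_ball_eq uw z h).1.
exact: (ultra_ball_eq uw z h).2.
Qed.

Definition Q x (b : {x : X | A x}) : Prop :=
  (A x /\ proj1_sig b = x) \/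
  (~ A x /\ forall y, Cl x y -> w (proj1_sig b) y < delta y + delta y).

Definition r x := epsilon (inhabits a0) (Q x).

Lemma rP x : Q x (r x).
Proof.
apply: epsilon_spec.
have [Ax|nAx] := pselect (A x); first by exists (exist _ x Ax); left.
have [a [Aa h]] := delta_adh (delta_gt0 nAx).
exists (exist _ a Aa); right; split => // y; rewrite /Cl /= => xy.
rewrite (delta_eq xy); apply: (ultra_ball uw (y := x)).
  by rewrite wsym.
have := delta_ge0 x; lra.
Qed.

Lemma rA x : A x -> proj1_sig (r x) = x.
Proof. by move=> Ax; case: (rP x) => [[_ //]|[nAx _]]. Qed.

Lemma rW x : w (proj1_sig (r x)) x <= delta x + delta x.
Proof.
have [Ax|nAx] := pselect (A x).
  by rewrite rA // wxx deltaA // addr0.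
case: (rP x) => [[//]|[_ h]]; apply: ltW; apply: h.
rewrite /Cl /= wxx; exact: delta_gt0.
Qed.

Lemma r_class x y : cond x y -> r y = r x.
Proof.
move=> [nAx h]; rewrite /r; congr epsilon; apply: funext => b; apply: propext.
have nAy := delta_notA h; rewrite /Q (Cl_eq h).
by split => -[[//]|[_ H]]; right; split.
Qed.


Definition psi x y := if pselect (cond x y) then rho S (w x y)
  else Num.max (rho S (delta x)) (rho S (delta y)).

Lemma psi_cond x y : cond x y -> psi x y = rho S (w x y).
Proof. by move=> c; rewrite /psi; case: pselect. Qed.

Lemma psi_ncond x y : ~ cond x y -> psi x y = Num.max (rho S (delta x)) (rho S (delta y)).
Proof. by move=> c; rewrite /psi; case: pselect. Qed.

Lemma psi_ge0 x y : 0 <= psi x y.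
Proof. by rewrite /psi; case: (pselect (cond x y)) => c; [apply: (rho_ge0 hS) | rewrite le_max (rho_ge0 hS)]. Qed.

Lemma psiS x y : S (psi x y).
Proof. by rewrite /psi; case: (pselect (cond x y)) => c; [apply: (rhoS hS) | apply: maxS; apply: (rhoS hS)]. Qed.

Lemma psi_xx x : psi x x = 0.
Proof.
have [Ax|nAx] := pselect (A x).
  by rewrite psi_ncond ?deltaA ?rho0 ?maxxx // => -[].
by rewrite psi_cond ?wxx ?rho0 //; split => //; rewrite wxx; apply: delta_gt0.
Qed.

Lemma psi_sym x y : psi x y = psi y x.
Proof.
case: (pselect (cond x y)) => c.
  by rewrite (psi_cond c) (psi_cond (cond_sym c)) wsym.
have c' : ~ cond y x by move/cond_sym.
by rewrite !psi_ncond // maxC.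
Qed.

Lemma psi_ncond_ge x y : ~ cond x y -> rho S (delta x) <= psi x y.
Proof. by move=> c; rewrite psi_ncond // le_max lexx. Qed.

Lemma psi_ncond_ge' x y : ~ cond x y -> rho S (delta y) <= psi x y.
Proof. by move=> c; rewrite psi_ncond // le_max lexx orbT. Qed.

Lemma psi_key x y z : ~ cond x y -> rho S (delta x) <= Num.max (psi x z) (psi z y).
Proof.
move=> nc; case: (pselect (cond x z)) => cxz.
- have [nAx hxz] := cxz.
  have ncz : ~ cond z y.
    move=> [_ hzy]; apply: nc; split => //.
    rewrite (delta_eq hxz) in hzy; exact: ultra_ball hxz hzy.
  rewrite -(delta_eq hxz); apply: le_trans (psi_ncond_ge ncz) _.
  by rewrite le_max lexx orbT.
- by apply: le_trans (psi_ncond_ge cxz) _; rewrite le_max lexx.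
Qed.

Lemma psi_ultra x y z : psi x y <= Num.max (psi x z) (psi z y).
Proof.
case: (pselect (cond x y)) => cxy.
- rewrite psi_cond //.
  case: (pselect (cond x z)) => cxz; last first.
    apply: le_trans (rho_mono hS (ltW cxy.2)) _.
    by apply: le_trans (psi_ncond_ge cxz) _; rewrite le_max lexx.
  case: (pselect (cond z y)) => czy; last first.
    apply: le_trans (rho_mono hS (ltW cxy.2)) _.
    rewrite -(delta_eq cxz.2).
    by apply: le_trans (psi_ncond_ge czy) _; rewrite le_max lexx orbT.
  by rewrite !psi_cond // -(rho_max hS); apply: (rho_mono hS); apply: wu.
- rewrite psi_ncond // ge_max; apply/andP; split; first exact: psi_key.
  have ncyx : ~ cond y x by move/cond_sym.
  by have := psi_key z ncyx; rewrite psi_sym (psi_sym z x) maxC.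
Qed.

Definition Ups (d : {x : X | A x} -> {x : X | A x} -> R) x y :=
  Num.max (d (r x) (r y)) (psi x y).

Lemma Ups_sym d x y : (forall a b, d a b = d b a) -> Ups d x y = Ups d y x.
Proof. by move=> ds; rewrite /Ups ds psi_sym. Qed.

Lemma Sp : S `<=` [set x | 0 <= x].
Proof. by case: hS. Qed.

Lemma r_val a : r (proj1_sig a) = a.
Proof. by apply: sig_eq; rewrite rA //; exact: proj2_sig a. Qed.

Lemma psiAA x y : A x -> A y -> psi x y = 0.
Proof. by move=> Ax Ay; rewrite psi_ncond ?deltaA ?rho0 ?maxxx // => -[]. Qed.


Section UpsProps.
Variable d : {x : X | A x} -> {x : X | A x} -> R.
Hypothesis hd : Ult (subspace_open A) S d.

Lemma ud : ultra d. Proof. by case: hd => h _; apply: S_ultra Sp h. Qed.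
Lemma gd : generates_topology (subspace_open A) d. Proof. by case: hd. Qed.
Lemma d0 a b : 0 <= d a b. Proof. by case: ud. Qed.
Lemma dxx a : d a a = 0. Proof. exact (ultra0 ud a). Qed.
Lemma dsym a b : d a b = d b a. Proof. by case: ud. Qed.

Lemma LE1 a eps : 0 < eps -> exists2 eta, 0 < eta &
  forall b, w (proj1_sig a) (proj1_sig b) < eta -> d a b < eps.
Proof.
move=> e0; have [eta eta0 h] := gen_local ud (sub_gen (A:=A) uw gw) gd a e0.
by exists eta => // b /h.
Qed.

Lemma LE2 a eta : 0 < eta -> exists2 eps, 0 < eps &
  forall b, d a b < eps -> w (proj1_sig a) (proj1_sig b) < eta.
Proof.
move=> e0; have [eps eps0 h] := gen_local (ultra_sub A uw) gd (sub_gen (A:=A) uw gw) a e0.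
by exists eps => // b /h.
Qed.

Lemma Ups_H1 x eps : 0 < eps -> exists2 eta, 0 < eta & forall y, w x y < eta -> Ups d x y < eps.
Proof.
move=> e0; have [Ax|nAx] := pselect (A x).
- have [eta eta0 h] := LE1 (r x) e0.
  have e3 : 0 < eta / 3 by lra.
  exists (Num.min (eta / 3) eps); first by rewrite lt_min e0 e3.
  move=> y; rewrite lt_min => /andP [h1 h2].
  rewrite /Ups gt_max; apply/andP; split.
    apply: h; rewrite rA //.
    have h3 := wu x (proj1_sig (r y)) y.
    have h4 := rW y. have h5 := delta_le y Ax.
    have h6 := max_le_sum (w0 x y) (w0 y (proj1_sig (r y))).
    rewrite (wsym (proj1_sig (r y)) y) in h4. rewrite (wsym y x) in h5.
    have := delta_ge0 y. lra.
  have ncxy : ~ cond x y by case.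
  rewrite psi_ncond // deltaA // rho0 gt_max e0 /=.
  apply: le_lt_trans (rho_le hS (delta_ge0 y)) _.
  by apply: le_lt_trans (delta_le y Ax) _; rewrite wsym.
- exists (Num.min (delta x) eps); first by rewrite lt_min e0 (delta_gt0 nAx).
  move=> y; rewrite lt_min => /andP [h1 h2].
  have c : cond x y by split.
  rewrite /Ups (r_class c) dxx psi_cond // gt_max e0 /=.
  exact: le_lt_trans (rho_le hS (w0 x y)) h2.
Qed.

Lemma Ups_H2 x eta : 0 < eta -> exists2 eps, 0 < eps & forall y, Ups d x y < eps -> w x y < eta.
Proof.
move=> e0; have [Ax|nAx] := pselect (A x).
- have e2 : 0 < eta / 2 by lra.
  have [e1 e10 h] := LE2 (r x) e2.
  have e4 : 0 < eta / 4 by lra.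
  exists (Num.min e1 (rho S (eta / 4))); first by rewrite lt_min e10 (rho_gt0 hS e4).
  move=> y; rewrite lt_min /Ups !gt_max => /andP [/andP [h1 h2] /andP [_ h3]].
  have h4 := h _ h1; rewrite rA // in h4.
  have ncxy : ~ cond x y by case.
  have h5 := rho_lt hS (le_lt_trans (psi_ncond_ge' ncxy) h3).
  have h6 := wu x y (proj1_sig (r y)).
  have h7 := max_le_sum (w0 x (proj1_sig (r y))) (w0 (proj1_sig (r y)) y).
  have h8 := rW y. lra.
- have dx := delta_gt0 nAx.
  exists (Num.min (rho S (delta x)) (rho S eta)); first by rewrite lt_min !(rho_gt0 hS).
  move=> y; rewrite lt_min /Ups !gt_max => /andP [/andP [_ h1] /andP [_ h2]].
  have c : cond x y.
    apply: contrapT => nc; have := psi_ncond_ge nc; by rewrite leNgt h1.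
  rewrite psi_cond // in h2. exact: (rho_lt hS h2).
Qed.

Lemma Ups_ult : Ult open S (Ups d).
Proof.
split; last by apply: (gen_equiv gw); [exact: Ups_H1 | exact: Ups_H2].
have [[dS _ _ _] _] := hd.
split.
- by move=> x y; apply: maxS; [apply: dS | apply: psiS].
- move=> x y; split; last by move=> ->; rewrite /Ups dxx psi_xx maxxx.
  move/(max0 (d0 _ _) (psi_ge0 x y)) => [hd0 hp0].
  have rxy : r x = r y by case: ud => _ h _ _; apply/h.
  case: (pselect (cond x y)) => c.
    by rewrite psi_cond // in hp0; apply: weq; apply: (rho_eq0 hS (w0 x y) hp0).
  rewrite psi_ncond // in hp0; have [h1 h2] := max0 (rho_ge0 hS _) (rho_ge0 hS _) hp0.
  have Ax : A x.
    apply: contrapT => nAx; have := rho_gt0 hS (delta_gt0 nAx); by rewrite h1 ltxx.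
  have Ay : A y.
    apply: contrapT => nAy; have := rho_gt0 hS (delta_gt0 nAy); by rewrite h2 ltxx.
  by rewrite -(rA Ax) -(rA Ay) rxy.
- by move=> x y; rewrite /Ups dsym psi_sym.
- move=> x y z; rewrite /Ups; apply: maxU; [by case: ud => _ _ _; apply | exact: psi_ultra].
Qed.

Lemma Ups_restr a b : Ups d (proj1_sig a) (proj1_sig b) = d a b.
Proof.
rewrite /Ups !r_val psiAA; [|exact: (proj2_sig a)|exact: (proj2_sig b)].
by apply/max_idPl; apply: d0.
Qed.

Lemma Ups_complete : complete_metric w -> complete_metric d -> complete_metric (Ups d).
Proof.
move=> cw cd u cau.
have [a ha] : exists a, forall eps, 0 < eps -> exists N, forall n, (N <= n)%N -> d (r (u n)) a < eps.
  apply: cd => eps e0; have [N hN] := cau eps e0; exists N => m n hm hn.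
  by apply: le_lt_trans (hN m n hm hn); rewrite le_max lexx.
suff [p hp] : exists p, forall eps, 0 < eps -> exists N, forall n, (N <= n)%N -> w (u n) p < eps.
  exists p => eps e0; have [eta eta0 h] := Ups_H1 p e0.
  have [N hN] := hp eta eta0; exists N => n hn.
  rewrite Ups_sym; last exact: dsym.
  by apply: h; rewrite wsym; apply: hN.
have [[N [nAN hN]]|nC] := pselect (exists N, ~ A (u N) /\
    forall n, (N <= n)%N -> w (u N) (u n) < delta (u N)).
- apply: cw => eps e0.
  have [M hM] := cau _ (rho_gt0 hS e0).
  exists (maxn N M) => m n; rewrite !geq_max => /andP [Nm Mm] /andP [Nn Mn].
  have hm := hN m Nm; have hn := hN n Nn.
  have c : cond (u m) (u n).
    split; first exact: delta_notA hm.
    rewrite (delta_eq hm); apply: (ultra_ball uw (y := u N)); first by rewrite wsym.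
    exact: hn.
  have := hM m n Mm Mn; rewrite /Ups gt_max psi_cond // => /andP [_ hh]; exact: (rho_lt hS hh).
- have dsmall : forall eta, 0 < eta -> exists N, forall n, (N <= n)%N -> delta (u n) < eta.
    move=> eta e0; have [N hN] := cau _ (rho_gt0 hS e0); exists N => n Nn.
    rewrite ltNge; apply/negP => le_eta.
    have nA : ~ A (u n).
      by move=> An; move: le_eta; rewrite deltaA // leNgt e0.
    apply: nC; exists n; split => // m nm.
    have := hN n m Nn (leq_trans Nn nm); rewrite /Ups gt_max => /andP [_ hp].
    case: (pselect (cond (u n) (u m))) => [[_ //]|nc].
    have := le_lt_trans (psi_ncond_ge nc) hp.
    by rewrite ltNge (rho_mono hS le_eta).
  exists (proj1_sig a) => eps e0.
  have e2 : 0 < eps / 2 by lra.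
  have e4 : 0 < eps / 4 by lra.
  have [e1 e10 h1] := LE2 a e2.
  have [N1 hN1] := ha e1 e10.
  have [N2 hN2] := dsmall (eps / 4) e4.
  exists (maxn N1 N2) => n; rewrite geq_max => /andP [n1 n2].
  have h3 : w (proj1_sig a) (proj1_sig (r (u n))) < eps / 2 by apply: h1; rewrite dsym; apply: hN1.
  have h4 := hN2 n n2.
  have h5 := rW (u n).
  have h6 := wu (u n) (proj1_sig a) (proj1_sig (r (u n))).
  have h7 := max_le_sum (w0 (u n) (proj1_sig (r (u n)))) (w0 (proj1_sig (r (u n))) (proj1_sig a)).
  rewrite (wsym (proj1_sig (r (u n))) (u n)) in h5. rewrite (wsym (proj1_sig a)) in h3.
  lra.
Qed.

End UpsProps.

Lemma maxL (a b c e : R) : a <= Num.max b e -> Num.max a c <= Num.max (Num.max b c) e.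
Proof. by move=> h; rewrite maxAC; apply: le_max2. Qed.

Lemma Ups_UD d1 d2 : Ult (subspace_open A) S d1 -> Ult (subspace_open A) S d2 ->
  UD S (Ups d1) (Ups d2) = UD S d1 d2.
Proof.
move=> h1 h2; rewrite /UD; congr (ereal_inf (_ `|` _)).
apply/seteqP; split => _ [eps [Se H] <-]; exists eps => //; split => //.
- move=> a b; have [H1 H2] := H (proj1_sig a) (proj1_sig b).
  by rewrite !(Ups_restr h1) !(Ups_restr h2) in H1 H2.
- move=> x y; have [H1 H2] := H (r x) (r y); split; rewrite /Ups; exact: maxL.
Qed.

Lemma Ups_mono d1 d2 : (forall a b, d1 a b <= d2 a b) -> forall x y, Ups d1 x y <= Ups d2 x y.
Proof.
move=> h x y; rewrite /Ups ge_max !le_max lexx orbT andbT.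
by rewrite h.
Qed.

Lemma Ups_max d e : Ups (fun a b => Num.max (d a b) (e a b)) = (fun x y => Num.max (Ups d x y) (Ups e x y)).
Proof. by apply: funext => x; apply: funext => y; rewrite /Ups maxACA maxxx. Qed.
End Main.
Section Empty.
Variables (R : realType) (S : set R) (X : topologicalType).
Hypothesis hS : characteristic S.
Variable w : X -> X -> R.
Hypothesis uw : ultra w.
Hypothesis gw : generates_topology open w.

Lemma rw_ult : Ult open S (fun x y => rho S (w x y)).
Proof.
have [w0 weq wsym wu] := uw.
split.
- split.
  + by move=> x y; apply: (rhoS hS).
  + move=> x y; split; last by move=> ->; rewrite (ultra0 uw) rho0.
    by move=> h; apply/weq; apply: (rho_eq0 hS (w0 x y) h).
  + by move=> x y; rewrite wsym.
  + by move=> x y z; rewrite -(rho_max hS); apply: (rho_mono hS).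
- apply: (gen_equiv gw).
  + move=> x eps e0; exists eps => // y h; exact: le_lt_trans (rho_le hS (w0 x y)) h.
  + move=> x eta e0; exists (rho S eta); first exact: (rho_gt0 hS e0).
    move=> y h; exact: (rho_lt hS h).
Qed.

Lemma rw_complete : complete_metric w -> complete_metric (fun x y => rho S (w x y)).
Proof.
move=> cw u cau.
have [p hp] : exists p, forall eps, 0 < eps -> exists N, forall n, (N <= n)%N -> w (u n) p < eps.
  apply: cw => eps e0; have [N hN] := cau _ (rho_gt0 hS e0).
  by exists N => m n hm hn; apply: (rho_lt hS); apply: hN.
exists p => eps e0; have [N hN] := hp eps e0; exists N => n hn.
have [w0 _ _ _] := uw.
exact: le_lt_trans (rho_le hS (w0 _ _)) (hN n hn).
Qed.
End Empty.

Section CompleteUltra.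
Variables (R : realType) (X : topologicalType).
Variable w : X -> X -> R.
Hypothesis uw : ultra w.
Hypothesis gw : generates_topology open w.
Variable m : X -> X -> R.
Hypothesis mm : is_metric m.
Hypothesis gm : generates_topology open m.
Hypothesis cm : complete_metric m.

Definition rad (k : nat) : R := (k.+1%:R)^-1.

Lemma rad_gt0 k : 0 < rad k.
Proof. by rewrite /rad invr_gt0 ltr0Sn. Qed.

Lemma rad_anti k k' : (k <= k')%N -> rad k' <= rad k.
Proof. by move=> h; rewrite /rad lef_pV2 ?posrE ?ltr0Sn // ler_nat. Qed.

Lemma mball_open x r : open [set y | m x y < r].
Proof.
have [m0 meq msym mt] := mm.
apply/gm => y /= xy; exists (r - m x y); first by rewrite subr_gt0.
move=> z /= yz; have := mt x z y; lra.
Qed.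

Definition Pk n x k : bool :=
  `[< exists z, [set y | w x y < rad k] `<=` [set y | m z y < rad n] >].

Lemma mxx x : m x x = 0. Proof. by case: mm => _ h _ _; apply/h. Qed.

Lemma Kex n x : exists k, Pk n x k.
Proof.
have hx : [set y | m x y < rad n] x by rewrite /= mxx rad_gt0.
have [r r0 sub] := (gw _).1 (mball_open x (rad n)) x hx.
exists (Num.truncn r^-1); apply/asboolP; exists x => y /= hy; apply: sub => /=.
exact: lt_trans hy (inv_trunc_lt r0).
Qed.

Definition Kf n x := ex_minn (Kex n x).

Lemma Kf_P n x : exists z, [set y | w x y < rad (Kf n x)] `<=` [set y | m z y < rad n].
Proof. by rewrite /Kf; case: ex_minnP => k /asboolP h _. Qed.

Lemma Kf_min n x k : (exists z, [set y | w x y < rad k] `<=` [set y | m z y < rad n]) ->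
  (Kf n x <= k)%N.
Proof. by move=> h; rewrite /Kf; case: ex_minnP => k' _ hm; apply: hm; apply/asboolP. Qed.

Definition cell n x := [set y | w x y < rad (Kf n x)].

Lemma cell_eq n x y : cell n x y -> cell n y = cell n x.
Proof.
have [_ _ ws _] := uw.
rewrite /cell /= => hxy.
have ky : (Kf n y <= Kf n x)%N.
  apply: Kf_min; have [z hz] := Kf_P n x; exists z => t /= hyt; apply: hz => /=.
  exact: (ultra_ball_eq uw t hxy).1 hyt.
have kx : (Kf n x <= Kf n y)%N.
  apply: Kf_min; have [z hz] := Kf_P n y; exists z => t /= hxt; apply: hz => /=.
  apply: (ultra_ball uw (y := x)) hxt.
  by rewrite ws; apply: lt_le_trans hxy (rad_anti ky).
have e : Kf n y = Kf n x by apply/eqP; rewrite eqn_leq ky kx.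
apply/seteqP; split => t /=; rewrite e.
  exact: (ultra_ball_eq uw t hxy).1.
exact: (ultra_ball_eq uw t hxy).2.
Qed.

Lemma cell_m n x y : cell n x = cell n y -> m x y < rad n + rad n.
Proof.
move=> e; have [z hz] := Kf_P n x.
have hx : m z x < rad n by apply: hz; rewrite /= (ultra0 uw) rad_gt0.
have hy : m z y < rad n.
  apply: hz; have : cell n y y by rewrite /cell /= (ultra0 uw) rad_gt0.
  by rewrite -e.
have [_ _ ms mt] := mm; have := mt x y z; rewrite (ms x z); lra.
Qed.

Definition Dset x y : set R :=
  [set 0] `|` [set rad n | n in [set n | cell n x <> cell n y]].

Lemma Dset_sup x y : has_sup (Dset x y).
Proof.
split; first by exists 0; left.
exists 1 => _ [-> | [n _ <-]]; first exact: ler01.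
apply: le_trans (rad_anti (leq0n n)) _; by rewrite /rad invr1.
Qed.

Definition v x y := sup (Dset x y).

Lemma v_ge0 x y : 0 <= v x y.
Proof. by apply: (sup_upper_bound (Dset_sup x y)); left. Qed.

Lemma v_ge x y n : cell n x <> cell n y -> rad n <= v x y.
Proof. by move=> h; apply: (sup_upper_bound (Dset_sup x y)); right; exists n. Qed.

Lemma v_le x y c : 0 <= c -> (forall n, cell n x <> cell n y -> rad n <= c) -> v x y <= c.
Proof.
move=> c0 h; apply: ge_sup; first by exists 0; left.
by move=> _ [-> | [n hn <-]] //; apply: h.
Qed.

Lemma v_xx x : v x x = 0.
Proof. by apply/le_anti; rewrite v_ge0 andbT; apply: v_le => // n []. Qed.

Lemma v_sym x y : v x y = v y x.
Proof.
by apply/le_anti/andP; split; apply: v_le; rewrite ?v_ge0 // => n h; apply: v_ge => e; apply: h.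
Qed.

Lemma v_ultra x y z : v x y <= Num.max (v x z) (v z y).
Proof.
apply: v_le; first by rewrite le_max v_ge0.
move=> n h; have [e|e] := pselect (cell n x = cell n z).
  have h' : cell n z <> cell n y by rewrite -e.
  by apply: le_trans (v_ge h') _; rewrite le_max lexx orbT.
by apply: le_trans (v_ge e) _; rewrite le_max lexx.
Qed.

Lemma v_small x y K : (forall n, (n <= K)%N -> cell n x = cell n y) -> v x y <= rad K.+1.
Proof.
move=> H; apply: v_le; first exact: ltW (rad_gt0 _).
move=> n h; case: (leqP n K) => [nk|kn]; first by case: h; apply: H.
exact: rad_anti kn.
Qed.

Lemma v_big x y n : v x y < rad n -> cell n x = cell n y.
Proof. by move=> h; apply: contrapT => c; have := v_ge c; rewrite leNgt h. Qed.

Definition uC x y := Num.max (w x y) (v x y).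

Lemma uu : ultra uC.
Proof.
have [w0 weq ws wu] := uw.
split.
- by move=> x y; rewrite le_max w0.
- move=> x y; split; last by move=> ->; rewrite /uC (ultra0 uw) v_xx maxxx.
  by move/(max0 (w0 x y) (v_ge0 x y)) => [/weq].
- by move=> x y; rewrite /uC ws v_sym.
- by move=> x y z; rewrite /uC; apply: maxU; [apply: wu | apply: v_ultra].
Qed.

Lemma eta_ex K x : exists2 eta, 0 < eta &
  forall y, w x y < eta -> forall n, (n <= K)%N -> cell n x = cell n y.
Proof.
elim: K => [|K [eta e0 h]].
  exists (rad (Kf 0 x)); first exact: rad_gt0.
  move=> y hy n; rewrite leqn0 => /eqP ->; apply/esym; apply: cell_eq; exact: hy.
exists (Num.min eta (rad (Kf K.+1 x))); first by rewrite lt_min e0 rad_gt0.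
move=> y; rewrite lt_min => /andP [h1 h2] n; rewrite leq_eqVlt => /orP [/eqP -> | hn].
  apply/esym; apply: cell_eq; exact: h2.
exact: h y h1 n hn.
Qed.

Lemma gu : generates_topology open uC.
Proof.
apply: (gen_equiv gw).
- move=> x eps e0.
  have hK : rad (Num.truncn eps^-1) < eps := inv_trunc_lt e0.
  have [eta eta0 h] := eta_ex (Num.truncn eps^-1) x.
  exists (Num.min eta eps); first by rewrite lt_min eta0 e0.
  move=> y; rewrite lt_min => /andP [h1 h2]; rewrite /uC gt_max h2 /=.
  apply: le_lt_trans (v_small (h y h1)) _.
  exact: le_lt_trans (rad_anti (leqnSn _)) hK.
- move=> x eta e0; exists eta => // y; rewrite /uC gt_max; by case/andP.
Qed.

Lemma cu : complete_metric uC.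
Proof.
move=> s cau.
have [p hp] : exists p, forall eps, 0 < eps -> exists N, forall n, (N <= n)%N -> m (s n) p < eps.
  apply: cm => eps e0.
  have e2 : 0 < eps / 2 by lra.
  have hn : rad (Num.truncn (eps / 2)^-1) < eps / 2 := inv_trunc_lt e2.
  have [N hN] := cau _ (rad_gt0 (Num.truncn (eps / 2)^-1)).
  exists N => i j hi hj.
  have := hN i j hi hj; rewrite /uC gt_max => /andP [_ /v_big /cell_m hc]; lra.
exists p => eps e0.
have [eta eta0 h] := gen_local uu gm gu p e0.
have [N hN] := hp eta eta0; exists N => n hn.
have [_ _ ms _] := mm; have [_ _ us _] := uu.
rewrite us; apply: h; rewrite ms; exact: hN.
Qed.

Lemma complete_ultra : exists u' : X -> X -> R, [/\ ultra u', generates_topology open u' & complete_metric u'].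
Proof. by exists uC; split; [exact: uu | exact: gu | exact: cu]. Qed.

End CompleteUltra.
Definition goodUps (R : realType) (S : set R) (X : topologicalType) (A : set X)
  (Ups : ({x : X | A x} -> {x : X | A x} -> R) -> (X -> X -> R)) : Prop :=
    [/\ forall d, Ult (subspace_open A) S d -> Ult (@open X) S (Ups d),
        forall d1 d2, Ult (subspace_open A) S d1 -> Ult (subspace_open A) S d2 ->
          UD S (Ups d1) (Ups d2) = UD S d1 d2,
        forall d, Ult (subspace_open A) S d ->
          forall a b : {x : X | A x}, Ups d (proj1_sig a) (proj1_sig b) = d a b,
        forall d1 d2, Ult (subspace_open A) S d1 -> Ult (subspace_open A) S d2 ->
          (forall a b, d1 a b <= d2 a b) -> forall x y, Ups d1 x y <= Ups d2 x y &
        forall d e, Ult (subspace_open A) S d -> Ult (subspace_open A) S e ->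
          Ups (fun a b => Num.max (d a b) (e a b)) =
          (fun x y => Num.max (Ups d x y) (Ups e x y))].

Lemma UD_refl (R : realType) (S : set R) (T : Type) (e : T -> T -> R) :
  S `<=` [set x | 0 <= x] -> S 0 -> UD S e e = 0%E.
Proof.
move=> Sp S0; apply/le_anti/andP; split.
  apply: ereal_inf_lbound; left; exists 0 => //; split => // x y.
  by split; rewrite le_max lexx.
apply: le_ereal_inf_tmp => _ [[eps [Se _] <-] | ->].
  by rewrite lee_fin; apply: Sp.
exact: leey.
Qed.

Lemma main_exists (R : realType) (S : set R) (X : topologicalType) (A : set X)
  (w : X -> X -> R) :
  characteristic S -> ultra w -> generates_topology open w -> closed A ->
  exists Ups, goodUps S Ups /\
    (complete_metric w -> forall d, Ult (subspace_open A) S d -> complete_metric d ->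
       complete_metric (Ups d)).
Proof.
move=> hS uw gw cA.
case: (pselect (exists a : {x : X | A x}, True)) => [[a0 _]|nA].
- exists (Ups S w a0); split; first split.
  + by move=> d hd; apply: (Ups_ult hS uw gw cA).
  + by move=> d1 d2 h1 h2; apply: (Ups_UD hS uw gw cA).
  + by move=> d hd; apply: (Ups_restr hS uw gw cA).
  + by move=> d1 d2 _ _; apply: Ups_mono.
  + by move=> d e _ _; apply: Ups_max.
  + by move=> cw d hd cd; apply: (Ups_complete hS uw gw cA).
- exists (fun _ x y => rho S (w x y)); split; first split.
  + by move=> d _; apply: rw_ult.
  + move=> d1 d2 _ _.
    have -> : d1 = d2 by apply: funext => a; case: nA; exists a.
    by case: hS => Sp S0 _; rewrite !UD_refl.
  + by move=> d _ a; case: nA; exists a.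
  + by move=> d1 d2 _ _ _ x y.
  + by move=> d e _ _; apply: funext => x; apply: funext => y; rewrite maxxx.
  + by move=> cw d _ _; apply: rw_complete.
Qed.

Theorem theorem1p11 (R : realType) (S : set R) (X : topologicalType) (A : set X) :
  characteristic S ->
  Ult (@open X) [set r : R | 0 <= r] !=set0 ->
  closed A ->
  (exists Ups : ({x : X | A x} -> {x : X | A x} -> R) -> (X -> X -> R),
    [/\ forall d, Ult (subspace_open A) S d -> Ult (@open X) S (Ups d),
        (* (B1) *)
        forall d1 d2, Ult (subspace_open A) S d1 -> Ult (subspace_open A) S d2 ->
          UD S (Ups d1) (Ups d2) = UD S d1 d2,
        (* (B2) *)
        forall d, Ult (subspace_open A) S d ->
          forall a b : {x : X | A x}, Ups d (proj1_sig a) (proj1_sig b) = d a b,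
        (* (B3) *)
        forall d1 d2, Ult (subspace_open A) S d1 -> Ult (subspace_open A) S d2 ->
          (forall a b, d1 a b <= d2 a b) -> forall x y, Ups d1 x y <= Ups d2 x y &
        (* (B4) *)
        forall d e, Ult (subspace_open A) S d -> Ult (subspace_open A) S e ->
          Ups (fun a b => Num.max (d a b) (e a b)) =
          (fun x y => Num.max (Ups d x y) (Ups e x y))])
  /\
  (completely_metrizable R X ->
   exists Ups : ({x : X | A x} -> {x : X | A x} -> R) -> (X -> X -> R),
    [/\ forall d, Ult (subspace_open A) S d -> Ult (@open X) S (Ups d),
        (* (B1) *)
        forall d1 d2, Ult (subspace_open A) S d1 -> Ult (subspace_open A) S d2 ->
          UD S (Ups d1) (Ups d2) = UD S d1 d2,
        (* (B2) *)
        forall d, Ult (subspace_open A) S d ->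
          forall a b : {x : X | A x}, Ups d (proj1_sig a) (proj1_sig b) = d a b,
        (* (B3) *)
        forall d1 d2, Ult (subspace_open A) S d1 -> Ult (subspace_open A) S d2 ->
          (forall a b, d1 a b <= d2 a b) -> forall x y, Ups d1 x y <= Ups d2 x y &
        (* (B4) *)
        forall d e, Ult (subspace_open A) S d -> Ult (subspace_open A) S e ->
          Ups (fun a b => Num.max (d a b) (e a b)) =
          (fun x y => Num.max (Ups d x y) (Ups e x y))]
    /\
        (* (B5) *)
        forall d, Ult (subspace_open A) S d -> complete_metric d ->
          complete_metric (Ups d)).
Proof.
move=> hS [w [wS gw]] cA.
have uw : ultra w := S_ultra (fun _ h => h) wS.
have [Ups [h1 h2]] := main_exists hS uw gw cA.
split; first by exists Ups.
move=> [m [mm gm cm]].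
have [u [uu gu cu]] := complete_ultra uw gw mm gm cm.
have [Ups' [h1' h2']] := main_exists hS uu gu cA.
by exists Ups'; split => // d hd cd; apply: h2'.
Qed.
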